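(* If $G$ is a connected cubic (3-regular) graph of order $n$ with $G \not\cong K_{3,3}$, then $\gamma_{\rm gr}^t(G) \ge \frac{1}{2}n$.
   Context: $N(v)$ denotes the open neighborhood of $v$. A sequence $S=(v_1,\ldots,v_k)$ of distinct vertices of a graph $G$ without isolated vertices is a legal sequence if $N(v_i)\setminus \bigcup_{j=1}^{i-1} N(v_j)\neq\emptyset$ for every $i\in\{2,\ldots,k\}$, and a total dominating sequence if moreover $\{v_1,\ldots,v_k\}$ is a total dominating set of $G$. $\gamma_{\rm gr}^t(G)$ is the maximum length of a total dominating sequence of $G$. *)

(* Defs.v *)
From mathcomp Require Import all_boot.
Set Implicit Arguments. Unset Strict Implicit. Unset Printing Implicit Defensive.

Section Graphs.
Variable T : finType.
Variable adj : rel T.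

Definition simple_graph : Prop := symmetric adj /\ irreflexive adj.

Definition N (v : T) : {set T} := [set u | adj v u].

Definition cubic : Prop := forall v, #|N v| = 3.

Definition connected_graph : Prop := forall x y : T, connect adj x y.

Definition NU (s : seq T) : {set T} := \bigcup_(v <- s) N v.

Definition legal_seq (s : seq T) : bool :=
  uniq s &&
  [forall i : 'I_(size s),
     (0 < i) ==> (N (tnth (in_tuple s) i) :\: NU (take i s) != set0)].

Definition total_dominating (S : {set T}) : bool :=
  [forall v : T, [exists u in S, adj v u]].

Definition total_dominating_seq (s : seq T) : bool :=
  legal_seq s && total_dominating [set x in s].

(* gamma_gr^t(G): maximum length of a total dominating sequence
   (lengths are bounded by #|T| since the vertices are distinct) *)
Definition gamma_grt : nat :=
  \max_(k < #|T|.+1 | [exists t : k.-tuple T, total_dominating_seq t]) k.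
End Graphs.

Definition K33_adj : rel (bool * 'I_3) := fun x y => x.1 != y.1.

Definition isomorphic (T1 T2 : finType) (a1 : rel T1) (a2 : rel T2) : Prop :=
  exists f : T1 -> T2, bijective f /\ forall x y, a2 (f x) (f y) = a1 x y.

(* Main.v *)
Require Import Defs.
From mathcomp Require Import all_boot zify.
Set Implicit Arguments. Unset Strict Implicit. Unset Printing Implicit Defensive.

Section Main.
Variable T : finType.
Variable adj : rel T.
Hypothesis Hsym : symmetric adj.
Hypothesis Hirr : irreflexive adj.
Hypothesis Hconn : connected_graph adj.
Hypothesis Hcub : cubic adj.

Local Notation N := (N adj).
Local Notation NU := (NU adj).

Lemma inN x y : (y \in N x) = adj x y.
Proof. by rewrite inE. Qed.

Lemma inNU s y : reflect (exists2 u, u \in s & adj u y) (y \in NU s).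
Proof.
rewrite /Defs.NU bigcup_seq; apply: (iffP bigcupP) => [[u Hu Hy]|[u Hu Hy]];
by exists u => //; rewrite ?inN in Hy *.
Qed.

Lemma NU_rcons s v : NU (rcons s v) = NU s :|: N v.
Proof.
apply/setP => y; rewrite inE; apply/inNU/orP => [[u]|].
  rewrite mem_rcons inE => /orP[/eqP->|Hu] Hy; first by right; rewrite inN.
  by left; apply/inNU; exists u.
case=> [/inNU[u Hu Hy]|]; first by exists u => //; rewrite mem_rcons inE Hu orbT.
by rewrite inN => Hy; exists v => //; rewrite mem_rcons inE eqxx.
Qed.

Lemma NU_nil : NU [::] = set0.
Proof. by apply/setP => y; rewrite inE; apply/inNU => -[]. Qed.

Lemma legal_rcons s v : legal_seq adj s ->
  (0 < size s -> N v :\: NU s != set0) -> v \notin s -> legal_seq adj (rcons s v).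
Proof.
move=> /andP[Hu /forallP Hf] Hn Hv.
rewrite /legal_seq rcons_uniq Hv Hu /=; apply/forallP => i; apply/implyP.
have Hi : i < (size s).+1 by rewrite -(size_rcons s v) ltn_ord.
rewrite (tnth_nth v) /=; move: Hi; move: (nat_of_ord i) => k Hk Hk0.
rewrite ltnS leq_eqVlt in Hk.
rewrite nth_rcons -cats1.
case/orP: Hk => [/eqP Hk|Hk].
  rewrite Hk ltnn eqxx take_size_cat //; apply: Hn; by rewrite -Hk.
rewrite Hk takel_cat ?(ltnW Hk) //.
have := Hf (Ordinal Hk); rewrite Hk0 /= (tnth_nth v) /=; exact.
Qed.

Definition Us (s : seq T) := ~: NU s.

Definition good (s : seq T) d := exists r, [/\ legal_seq adj r, Us r = set0 & 2 * size s + d <= 2 * size r].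

Lemma good_mono s d d' : good s d -> d' <= d -> good s d'.
Proof. by move=> [r [H1 H2 H3]] H; exists r; split => //; apply: leq_trans H3; rewrite leq_add2l. Qed.

Lemma good_rcons s v d : good (rcons s v) d -> good s (d + 2).
Proof. move=> [r [H1 H2 H3]]; exists r; split => //; move: H3; rewrite size_rcons; lia. Qed.

Lemma good0 s : legal_seq adj s -> Us s = set0 -> good s 0.
Proof. by move=> H1 H2; exists s; split => //; rewrite addn0. Qed.

Lemma Us_rcons s v : Us (rcons s v) = Us s :\: N v.
Proof. by rewrite /Us NU_rcons setCU setDE. Qed.


Lemma closed_all (P : pred T) : (forall x y, adj x y -> P x -> P y) -> forall x y, P x -> P y.
Proof.
move=> HP x y Px.
have Hc : closed adj P.
  move=> a b Hab; apply/idP/idP; first exact: HP.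
  by apply: HP; rewrite Hsym.
by have := closed_connect Hc (Hconn x y); rewrite !unfold_in Px => <-.
Qed.

Lemma N_card v : #|N v| = 3.
Proof. exact: Hcub. Qed.

Lemma N_nonempty v : exists y, y \in N v.
Proof. by apply/set0Pn; rewrite -cards_eq0 N_card. Qed.

Lemma sub_disj_F v (U : {set T}) : N v \subset U -> [disjoint N v & U] -> False.
Proof.
move=> /setIidPl H1; rewrite -setI_eq0 H1 => /eqP H2.
by have := N_card v; rewrite H2 cards0.
Qed.

Lemma disjF (A B : {set T}) x : [disjoint A & B] -> x \in A -> x \in B -> False.
Proof. by rewrite disjoints_subset => /subsetP H /H; rewrite inE => /negP. Qed.

Definition stuck (U : {set T}) := (U != set0) && [forall v, (N v \subset U) || [disjoint N v & U]].

Lemma stuck_proper U : stuck U -> U != setT -> forall v,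
  ((v \in U) = [disjoint N v & U]) /\ ((v \notin U) = (N v \subset U)).
Proof.
move=> /andP[HU0 /forallP HS] HUT.
have Hi : forall v, v \in U -> ~~ (N v \subset U).
  move=> v Hv; apply/negP => Hs; move/negP: HUT; apply; apply/eqP/setP => y.
  rewrite inE.
  suff HP : forall x z, adj x z -> (x \in U) && (N x \subset U) -> (z \in U) && (N z \subset U).
    have := @closed_all (fun x => (x \in U) && (N x \subset U)) HP v y.
    by rewrite Hv Hs => /(_ isT) /andP[].
  move=> x z Hxz /andP[Hx Hsx]; have Hz : z \in U by apply: (subsetP Hsx); rewrite inN.
  rewrite Hz /=; case/orP: (HS z) => // Hd; exfalso.
  apply: (disjF Hd _ Hx); by rewrite inN Hsym.
have Hii : forall v, v \notin U -> ~~ [disjoint N v & U].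
  move=> v Hv; apply/negP => Hs; move/negP: HU0; apply; apply/eqP/setP => y.
  rewrite inE.
  suff HP : forall x z, adj x z -> (x \notin U) && [disjoint N x & U] -> (z \notin U) && [disjoint N z & U].
    have := @closed_all (fun x => (x \notin U) && [disjoint N x & U]) HP v y.
    by rewrite Hv Hs => /(_ isT) /andP[] /negbTE ->.
  move=> x z Hxz /andP[Hx Hsx]; have Hz : z \notin U.
    apply/negP => Hz; apply: (disjF Hsx _ Hz); by rewrite inN.
  rewrite Hz /=; case/orP: (HS z) => // Hd; exfalso.
  by move/negP: Hx; apply; apply: (subsetP Hd); rewrite inN Hsym.
move=> v; split.
  case Hv: (v \in U).
    by have := Hi v Hv; case/orP: (HS v) => [->|->].
  by apply/esym/negbTE/Hii; rewrite Hv.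
case Hv: (v \in U) => /=.
  by apply/esym/negbTE/Hi.
by have := Hii v (negbT Hv); case/orP: (HS v) => [->|->].
Qed.

Lemma stuck_chain U W : stuck U -> U != setT -> stuck W -> W \proper U -> False.
Proof.
move=> HU HUT HW /properP[HWU [z HzU HzW]].
have HWT : W != setT.
  apply/negP => /eqP HWT; move: HzW; by rewrite HWT inE.
have [_ H2] := stuck_proper HW HWT z; rewrite HzW in H2.
have [H3 _] := stuck_proper HU HUT z; rewrite HzU in H3.
apply: (@sub_disj_F z U); last by rewrite -H3.
by apply: subset_trans HWU; rewrite -H2.
Qed.


Lemma K33_of2 (A B : {set T}) a0 : a0 \in A ->
  (forall x, x \in A -> N x = B) -> (forall y, y \in B -> N y = A) ->
  isomorphic adj K33_adj.
Proof.
move=> Ha0 HA HB.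
have Hdis : forall x, x \in A -> x \in B -> False.
  move=> x HxA HxB; have := HA x HxA; move/setP/(_ x); rewrite HxB inN Hirr //.
have Hall : forall y, (y \in A) || (y \in B).
  move=> y; apply: (@closed_all (fun x => (x \in A) || (x \in B)) _ a0); last by rewrite Ha0.
  move=> x z Hxz /orP[Hx|Hx].
    by rewrite -(HA x Hx) inN Hxz orbT.
  by rewrite -(HB x Hx) inN Hxz.
have HBc : B = ~: A.
  apply/setP => y; rewrite inE; case HyA: (y \in A); last by have := Hall y; rewrite HyA.
  by apply/negP => HyB; apply: (Hdis y).
have [b0 Hb0] := N_nonempty a0; rewrite (HA a0 Ha0) in Hb0.
have cA : #|A| = 3 by rewrite -(HB b0 Hb0) N_card.
have cB : #|B| = 3 by rewrite -(HA a0 Ha0) N_card.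
have Hadj : forall x y, adj x y = ((x \in A) != (y \in A)).
  move=> x y; case HxA: (x \in A).
    by rewrite -inN (HA x HxA) HBc inE; case: (y \in A).
  have HxB : x \in B by rewrite HBc inE HxA.
  by rewrite -inN (HB x HxB); case: (y \in A).
pose g (p : bool * 'I_3) := nth a0 (enum (if p.1 then A else B)) p.2.
have Hg : forall p, (g p \in A) = p.1.
  case=> [[] i] /=; rewrite /g /=.
    by rewrite -mem_enum mem_nth // -cardE cA.
  have : nth a0 (enum B) i \in B by rewrite -mem_enum mem_nth // -cardE cB.
  by rewrite HBc inE => /negbTE.
have ginj : injective g.
  move=> [b1 i1] [b2 i2] Heq.
  have Hb : b1 = b2 by have := Hg (b1, i1); rewrite Heq Hg.
  subst b2; congr pair; apply: val_inj => /=.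
  move: Heq; rewrite /g /=; move/eqP; rewrite nth_uniq ?enum_uniq //; first by move/eqP.
    by case: b1; rewrite -cardE ?cA ?cB.
  by case: b1; rewrite -cardE ?cA ?cB.
have gbij : bijective g.
  apply: (inj_card_bij ginj).
  rewrite card_prod card_bool card_ord -(cardsC A) -HBc cA cB //.
case: gbij => h gh hg.
exists h; split; first by exists g.
move=> x y; rewrite -{2}(hg x) -{2}(hg y) Hadj !Hg //.
Qed.

Lemma stuck3 U : stuck U -> U != setT -> #|U| = 3 -> isomorphic adj K33_adj.
Proof.
move=> HU HUT HU3.
have [a0 Ha0] : exists a0, a0 \in ~: U.
  apply/set0Pn; apply: contra HUT => /eqP H; apply/eqP; by rewrite -(setCK U) H setC0.
apply: (@K33_of2 (~: U) U a0 Ha0).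
  move=> x; rewrite inE => Hx; have [_ H] := stuck_proper HU HUT x.
  rewrite Hx in H; apply/eqP; rewrite eqEcard -H HU3 N_card //.
move=> y Hy; have [H _] := stuck_proper HU HUT y; rewrite Hy in H.
apply/setP => z; rewrite in_setC; apply/idP/idP.
  move=> Hz; apply/negP => HzU; exact: (disjF (esym H) Hz HzU).
move=> Hz; have [_ H2] := stuck_proper HU HUT z; rewrite Hz in H2.
have HNz : N z = U by apply/eqP; rewrite eqEcard -H2 HU3 N_card.
by rewrite inN Hsym -inN HNz.
Qed.


Lemma nonstuck_step U : U != set0 -> ~~ stuck U -> exists v, 0 < #|N v :&: U| < 3.
Proof.
move=> HU; rewrite /stuck HU /= => /forallPn [v]; rewrite negb_or => /andP[Hs Hd].
exists v; apply/andP; split.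
  by rewrite card_gt0 setI_eq0.
rewrite ltn_neqAle -(N_card v) subset_leq_card ?subsetIl // andbT.
apply: contra Hs => /eqP Hc.
have : N v :&: U == N v.
  rewrite eqEcard subsetIl /=. rewrite Hc. by [].
by move/eqP/setIidPl.
Qed.

Lemma Us_notT s : 0 < size s -> Us s != setT.
Proof.
case: s => // x s _; have [y Hy] := N_nonempty x.
apply/negP => /eqP H; have : y \in Us (x :: s) by rewrite H inE.
rewrite inE => /negP; apply; apply/inNU; exists x; [by rewrite inE eqxx | by rewrite -inN].
Qed.

Lemma step s v : legal_seq adj s -> 0 < size s -> 0 < #|N v :&: Us s| ->
  [/\ legal_seq adj (rcons s v), 0 < size (rcons s v),
      #|Us (rcons s v)| = #|Us s| - #|N v :&: Us s|,
      Us (rcons s v) \subset Us s &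
      (Us (rcons s v) = set0 -> good s 2)].
Proof.
move=> Hl Hs Hf.
have Hv : v \notin s.
  apply/negP => Hv; move: Hf; rewrite card_gt0 => /set0Pn [y].
  rewrite !inE => /andP[Hy /negP]; apply; apply/inNU; by exists v.
have Hl' : legal_seq adj (rcons s v).
  apply: legal_rcons => // _; by rewrite setDE -card_gt0.
split => //.
- by rewrite size_rcons.
- by rewrite Us_rcons cardsD setIC.
- by rewrite Us_rcons subsetDl.
move=> H0; have := good_rcons (good0 Hl' H0); by [].
Qed.

Definition endgame := forall U : {set T}, 0 < #|U| <= 2 -> exists v, #|N v :&: U| = 1.

Lemma endgame_of : (forall a b, a != b -> N a != N b) -> endgame.
Proof.
move=> Htw U /andP[HU1 HU2].
case Hex: [exists v, #|N v :&: U| == 1].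
  by case/existsP: Hex => v /eqP; exists v.
exfalso; move/negbT: Hex => /existsPn Hno.
have [u Hu] : exists u, u \in U by apply/set0Pn; rewrite -card_gt0.
have Hw : forall w, w \in N u -> U \subset N w /\ #|U| = 2.
  move=> w Hw.
  have Hk1 : 0 < #|N w :&: U|.
    by rewrite card_gt0; apply/set0Pn; exists u; rewrite inE Hu andbT inN Hsym -inN.
  have Hk2 : #|N w :&: U| <= #|U| by rewrite subset_leq_card ?subsetIr.
  have Hk3 := Hno w.
  have Hk : #|N w :&: U| = #|U| by move: Hk3; lia.
  split; last by move: Hk3; lia.
  have : N w :&: U == U.
    rewrite eqEcard subsetIr /=. rewrite Hk. by [].
  by move/eqP/setIidPr.
have [w0 Hw0] := N_nonempty u.
have [_ HU] := Hw w0 Hw0.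
have [u' Hu'] : exists u', u' \in U :\ u.
  by apply/set0Pn; rewrite -card_gt0; move: HU; rewrite (cardsD1 u U) Hu; lia.
move: Hu'; rewrite !inE => /andP[Hne Hu'].
have Hsub : N u \subset N u'.
  apply/subsetP => w Hw1; have [Hs _] := Hw w Hw1.
  by have := subsetP Hs u' Hu'; rewrite !inN Hsym.
have : N u == N u' by rewrite eqEcard Hsub !N_card.
by move/eqP; apply/eqP; apply: Htw; rewrite eq_sym.
Qed.

Lemma twin_case a b : a != b -> N a = N b -> ~ isomorphic adj K33_adj ->
  exists x y, #|N x :&: N y| = 2.
Proof.
move=> Hab HN Hnot.
case Hex: [exists x, exists y, [&& x \in N a, y \in N a & N x != N y]].
  case/existsP: Hex => x /existsP [y /and3P[Hx Hy Hxy]].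
  exists x, y.
  have Hsub : [set a; b] \subset N x :&: N y.
    apply/subsetP => z; rewrite !inE => /orP[]/eqP ->.
      by rewrite (Hsym x) (Hsym y) -!inN Hx Hy.
    by rewrite (Hsym x) (Hsym y) -!inN -HN Hx Hy.
  have H2 := subset_leq_card Hsub; rewrite cards2 Hab in H2.
  have H3 : #|N x :&: N y| <= 3 by rewrite -(N_card x) subset_leq_card ?subsetIl.
  suff : #|N x :&: N y| != 3 by lia.
  apply: contra Hxy => /eqP Hc.
  have He1 : N x :&: N y == N x by rewrite eqEcard subsetIl Hc N_card.
  have He2 : N x :&: N y == N y by rewrite eqEcard subsetIr Hc N_card.
  by apply/eqP; rewrite -(eqP He1) (eqP He2).
exfalso; apply: Hnot.
move/negbT: Hex => Hall.
have Hall' : forall x y, x \in N a -> y \in N a -> N x = N y.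
  move=> x y Hx Hy; apply/eqP; apply/negPn; apply: contra Hall => Hxy.
  by apply/existsP; exists x; apply/existsP; exists y; rewrite Hx Hy.
have [x1 Hx1] := N_nonempty a.
apply: (@K33_of2 (N a) (N x1) x1 Hx1) => [x Hx|y Hy]; first exact: Hall'.
apply/eqP; rewrite eq_sym eqEcard !N_card leqnn andbT.
apply/subsetP => x Hx; rewrite inN Hsym -inN (Hall' x x1) //.
Qed.

Lemma td_of r : legal_seq adj r -> Us r = set0 -> size r <= gamma_grt adj.
Proof.
move=> Hl HU.
have Htd : total_dominating_seq adj r.
  rewrite /total_dominating_seq Hl /=; apply/forallP => v.
  have : v \in NU r by apply/negPn; move/setP: HU => /(_ v); rewrite !inE => ->.
  case/inNU => u Hu Huv; apply/existsP; exists u; by rewrite inE Hu Hsym.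
have Hsz : size r < #|T|.+1.
  rewrite ltnS; move: Hl => /andP[Hu _]; rewrite -(card_uniqP Hu); exact: max_card.
apply: (@leq_bigmax_cond _ _ (fun k : 'I_#|T|.+1 => nat_of_ord k) (Ordinal Hsz)).
by apply/existsP; exists (in_tuple r).
Qed.

Variable E : bool.
Hypothesis HE : E -> endgame.
Hypothesis Hnot : ~ isomorphic adj K33_adj.

Lemma process m : forall s, #|Us s| <= m -> legal_seq adj s -> 0 < size s -> Us s != set0 ->
  ((forall W : {set T}, W \subset Us s -> ~~ stuck W) -> good s (#|Us s| + E)) /\
  good s (#|Us s| + E - 1).
Proof.
elim: m => [|m IH] s Hm Hl Hs HU.
  by move: HU; rewrite -card_gt0; move: Hm; case: #|Us s|.
have partA : (forall W : {set T}, W \subset Us s -> ~~ stuck W) -> good s (#|Us s| + E).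
  move=> Hh.
  have [v Hv1 Hv2] : exists2 v, 0 < #|N v :&: Us s| &
      (#|N v :&: Us s| < 3) && (~~ (E && (#|Us s| <= 2)) || (#|N v :&: Us s| == 1)).
    case HEs: (E && (#|Us s| <= 2)).
      case/andP: HEs => HE1 HE2.
      have Heg : endgame := HE HE1.
      have [v Hv] := Heg (Us s) (ltac:(by rewrite card_gt0 HU HE2)).
      by exists v; rewrite Hv.
    have [v /andP[H1 H2]] := nonstuck_step HU (Hh _ (subxx _)).
    by exists v; rewrite ?H1 ?H2.
  have [Hl' Hs' Hc Hsub H0] := @step s v Hl Hs Hv1.
  case/andP: Hv2 => Hv2 Hv3.
  have [HU'|HU'] := eqVneq (Us (rcons s v)) set0.
    apply: good_mono (H0 HU') _.
    move: Hc; rewrite HU' cards0 => Hc.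
    move: Hv3; case: E => /=; last by lia.
    by rewrite -ltnNge => /orP[H|/eqP H]; lia.
  have Hm' : #|Us (rcons s v)| <= m by lia.
  have [HA _] := IH _ Hm' Hl' Hs' HU'.
  have := good_rcons (HA (fun W HW => Hh W (subset_trans HW Hsub))).
  move/good_mono; apply; lia.
split => //.
case HS: (stuck (Us s)).
  have [u Hu] : exists u, u \in Us s by apply/set0Pn.
  have [v Hv] := N_nonempty u.
  have HvU : u \in N v :&: Us s by rewrite inE Hu andbT inN Hsym -inN.
  have Hsv : N v \subset Us s.
    move: HS => /andP[_ /forallP /(_ v) /orP[]] // Hd.
    exfalso; move: HvU; rewrite inE => /andP[H1 H2]; exact: (disjF Hd H1 H2).
  have Hf : #|N v :&: Us s| = 3 by rewrite (setIidPl Hsv) N_card.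
  have [Hl' Hs' Hc Hsub H0] := @step s v Hl Hs (ltac:(by rewrite Hf)).
  have [HU'|HU'] := eqVneq (Us (rcons s v)) set0.
    exfalso; apply: Hnot; apply: (stuck3 HS (Us_notT Hs)).
    move: Hc; rewrite HU' cards0 Hf => Hc.
    have := subset_leq_card Hsv; rewrite N_card; lia.
  have Hm' : #|Us (rcons s v)| <= m by lia.
  have [HA _] := IH _ Hm' Hl' Hs' HU'.
  have Hh : forall W : {set T}, W \subset Us (rcons s v) -> ~~ stuck W.
    move=> W HW; apply/negP => HSW; apply: (stuck_chain HS (Us_notT Hs) HSW).
    apply/properP; split; first exact: subset_trans HW Hsub.
    exists u => //; apply/negP => HuW; have := subsetP HW u HuW.
    by rewrite Us_rcons inE; move: HvU; rewrite inE => /andP[-> _].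
  have := good_rcons (HA Hh); move/good_mono; apply; lia.
have [v /andP[Hv1 Hv2]] := nonstuck_step HU (negbT HS).
have [Hl' Hs' Hc Hsub H0] := @step s v Hl Hs Hv1.
have [HU'|HU'] := eqVneq (Us (rcons s v)) set0.
  apply: good_mono (H0 HU') _.
  move: Hc; rewrite HU' cards0 => Hc; case: E; lia.
have Hm' : #|Us (rcons s v)| <= m by lia.
have [_ HB] := IH _ Hm' Hl' Hs' HU'.
have := good_rcons HB; move/good_mono; apply; case: E; lia.
Qed.


End Main.

Section Final.
Variable T : finType.
Variable adj : rel T.
Hypothesis Hsym : symmetric adj.
Hypothesis Hirr : irreflexive adj.
Hypothesis Hconn : connected_graph adj.
Hypothesis Hcub : cubic adj.
Local Notation N := (N adj).
Local Notation NU := (NU adj).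

Lemma even_n : ~~ odd #|T|.
Proof.
pose P := [set p : T * T | adj p.1 p.2].
have H3 : #|P| = 3 * #|T|.
  have -> : 3 * #|T| = \sum_x #|N x|.
    rewrite (eq_bigr (fun=> 3)); last by move=> x _; exact: Hcub.
    by rewrite sum_nat_const cardT -cardE mulnC.
  rewrite (eq_bigr (fun x => \sum_(y | adj x y) 1)); last first.
    by move=> x _; rewrite -sum1_card; apply: eq_bigl => y; rewrite inE.
  rewrite pair_big_dep /= -sum1_card; apply: eq_bigl => p; by rewrite inE.
pose r (p : T * T) := (enum_rank p.1 < enum_rank p.2)%N.
pose P1 := [set p in P | r p].
pose sw (p : T * T) := (p.2, p.1).
have swi : injective sw by move=> [a b] [c d] [-> ->].
have HP : P = P1 :|: sw @^-1: P1.
  apply/setP => -[a b]; rewrite !inE /r /= (Hsym b a).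
  case Hab : (adj a b) => //=.
  have : enum_rank a != enum_rank b.
    apply/negP => /eqP /enum_rank_inj Heq; subst b; by rewrite Hirr in Hab.
  rewrite neq_ltn; by case/orP => ->; rewrite ?orbT.
have HI : P1 :&: sw @^-1: P1 = set0.
  apply/setP => -[a b]; rewrite !inE /r /=.
  case: (ltngtP (enum_rank a) (enum_rank b)); by rewrite ?andbF.
have : #|P| = 2 * #|P1| by rewrite {1}HP cardsU HI cards0 card_preimset // subn0 addnn mul2n.
move=> H2; move: H3; rewrite H2 => /(congr1 odd); rewrite !oddM /=.
by move=> <-.
Qed.

End Final.

Unset Implicit Arguments.

Theorem mainTheorem15 (T : finType) (adj : rel T) :
  simple_graph adj -> connected_graph adj -> cubic adj ->
  ~ isomorphic adj K33_adj ->
  #|T| <= 2 * gamma_grt adj.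
Proof.
move=> [Hsym Hirr] Hconn Hcub Hnot.
have Hev := even_n Hsym Hirr Hcub.
suff H : #|T|.-1 <= 2 * gamma_grt adj.
  have Hn : #|T| = 2 * (#|T|./2) by rewrite mul2n even_halfK.
  lia.
case: (pickP (@predT T)) => [x0 _|H0]; last first.
  by rewrite (@eq_card0 _ T).
have Hl0 : legal_seq adj [::] by rewrite /legal_seq /=; apply/forallP => -[].
have Hl1 : forall z, legal_seq adj [:: z].
  move=> z; exact: (@legal_rcons _ adj [::] z Hl0).
have HU1 : forall z, Us adj [:: z] = ~: N adj z.
  move=> z; by rewrite /Us -[ [:: z] ]/(rcons [::] z) NU_rcons NU_nil set0U.
have cU1 : forall z, #|Us adj [:: z]| = #|T| - 3.
  move=> z; by rewrite HU1 cardsCs setCK Hcub.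
case Htw: [forall a, forall b, (a != b) ==> (N adj a != N adj b)].
  have HE : true -> endgame adj.
    move=> _; apply: endgame_of Hsym Hcub _ => a b Hab.
    by move/forallP: Htw => /(_ a) /forallP /(_ b); rewrite Hab.
  have [HU0|HU0] := eqVneq (Us adj [:: x0]) set0.
    have := td_of Hsym (Hl1 x0) HU0; have := cU1 x0; rewrite HU0 cards0 /=; lia.
  have Hpos : 0 < #|Us adj [:: x0]| by rewrite card_gt0.
  have [_ [r [Hr1 Hr2 Hr3]]] := process Hsym Hirr Hconn Hcub HE Hnot (leqnn _) (Hl1 x0) isT HU0.
  have := td_of Hsym Hr1 Hr2; move: Hr3 Hpos; rewrite cU1 /=; lia.
move/negbT: Htw => /forallPn [a /forallPn [b]]; rewrite negb_imply negbK => /andP[Hab /eqP HN].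
have [x [y Hxy]] := twin_case Hsym Hirr Hconn Hcub Hab HN Hnot.
have Hyx : y != x.
  apply/negP => /eqP Heq; move: Hxy; rewrite Heq setIid Hcub.
  done.
have Hd : #|N adj y :\: N adj x| = 1 by rewrite cardsD setIC Hxy Hcub.
have Hl2 : legal_seq adj [:: x; y].
  apply: (@legal_rcons _ adj [:: x] y (Hl1 x)).
    move=> _; rewrite -[ [:: x] ]/(rcons [::] x) NU_rcons NU_nil set0U.
    by rewrite -card_gt0 Hd.
  by rewrite inE.
have HU2 : Us adj [:: x; y] = ~: (N adj x :|: N adj y).
  by rewrite /Us -[ [:: x; y] ]/(rcons (rcons [::] x) y) !NU_rcons NU_nil set0U.
have cU2 : #|Us adj [:: x; y]| = #|T| - 4.
  by rewrite HU2 cardsCs setCK cardsU !Hcub Hxy.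
have HE : false -> endgame adj by [].
have [HU0|HU0] := eqVneq (Us adj [:: x; y]) set0.
  have := td_of Hsym Hl2 HU0; have := cU2; rewrite HU0 cards0 /=; lia.
have Hpos : 0 < #|Us adj [:: x; y]| by rewrite card_gt0.
have [_ [r [Hr1 Hr2 Hr3]]] := process Hsym Hirr Hconn Hcub HE Hnot (leqnn _) Hl2 isT HU0.
have := td_of Hsym Hr1 Hr2; move: Hr3 Hpos; rewrite cU2 /=; lia.
Qed.
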